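(* Let $n=2$, $m=1$, $v_1(x)=x$ and $v_2(x)=2x$. Then for every $\rho<0$ there is no pricing rule $p:\mathbb{R}_{\ge0}\to\mathbb{R}$ and allocation $\mathbf{x}\in\Psi(\rho)$ such that $(\mathbf{x},p)$ is a Walrasian equilibrium.
   Context: Single good of supply 1; an allocation is $(x_1,x_2)\in\mathbb{R}^2_{\ge0}$ with $x_1+x_2\le1$. For $\rho<0$, $\Psi(\rho)$ is the set of allocations maximizing the CES welfare $(v_1(x_1)^\rho+v_2(x_2)^\rho)^{1/\rho}$. Quasilinear demand set $D_i(p)=\arg\max_{y\ge0}(v_i(y)-p(y))$. $(\mathbf{x},p)$ is a Walrasian equilibrium if $x_i\in D_i(p)$ for $i=1,2$, $x_1+x_2\le1$, and $x_1+x_2=1$ if the good has nonzero cost (some $y$ has $p(y)>0$). *)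

(* Defs.v *)
From Stdlib Require Import Reals.
Open Scope R_scope.

Definition feasible (x1 x2 : R) : Prop := 0 <= x1 /\ 0 <= x2 /\ x1 + x2 <= 1.

(* CES welfare (a^rho + b^rho)^(1/rho) for rho < 0, extended by continuity
   (value 0) when some agent's value is 0 (where a^rho is undefined/+oo). *)
Definition ces (rho a b : R) : R :=
  if Rle_dec a 0 then 0
  else if Rle_dec b 0 then 0
  else Rpower (Rpower a rho + Rpower b rho) (/ rho).

Definition in_Psi (v1 v2 : R -> R) (rho x1 x2 : R) : Prop :=
  feasible x1 x2 /\
  forall y1 y2, feasible y1 y2 -> ces rho (v1 y1) (v2 y2) <= ces rho (v1 x1) (v2 x2).

(* Quasilinear demand: x in argmax_{y >= 0} (v y - p y).
   The pricing rule p is only evaluated on R_{>=0}. *)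
Definition in_demand (v p : R -> R) (x : R) : Prop :=
  0 <= x /\ forall y, 0 <= y -> v y - p y <= v x - p x.

Definition walrasian (v1 v2 p : R -> R) (x1 x2 : R) : Prop :=
  in_demand v1 p x1 /\ in_demand v2 p x2 /\ x1 + x2 <= 1 /\
  ((exists y, 0 <= y /\ p y > 0) -> x1 + x2 = 1).

(* Main.v *)
Require Import Defs.
From Stdlib Require Import Reals.
From Stdlib Require Import Lra Classical.
Open Scope R_scope.

Lemma Rpow_pos a r : 0 < Rpower a r.
Proof. unfold Rpower; apply exp_pos. Qed.

Lemma Rpow_anti a b r : 0 < a -> a < b -> r < 0 -> Rpower b r < Rpower a r.
Proof.
  intros Ha Hab Hr. unfold Rpower. apply exp_increasing.
  assert (ln a < ln b) by (apply ln_increasing; lra).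
  apply Rmult_lt_gt_compat_neg_l; lra.
Qed.

Lemma ces_eq rho a b : 0 < a -> 0 < b ->
  ces rho a b = Rpower (Rpower a rho + Rpower b rho) (/ rho).
Proof.
  intros Ha Hb; unfold ces.
  destruct (Rle_dec a 0); [lra|]. destruct (Rle_dec b 0); [lra|]. reflexivity.
Qed.

Lemma ces_lt rho a b c d : rho < 0 -> 0 < a -> 0 < b -> 0 < c -> 0 < d ->
  Rpower c rho + Rpower d rho < Rpower a rho + Rpower b rho ->
  ces rho a b < ces rho c d.
Proof.
  intros Hr Ha Hb Hc Hd H. rewrite !ces_eq by assumption.
  apply Rpow_anti; [|assumption|].
  - pose proof (Rpow_pos c rho); pose proof (Rpow_pos d rho); lra.
  - apply Rinv_lt_0_compat; assumption.
Qed.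

Lemma two_pow_lt1 r : r < 0 -> Rpower 2 r < 1.
Proof.
  intros Hr. replace 1 with (Rpower 1 r).
  - apply Rpow_anti; lra.
  - unfold Rpower. rewrite ln_1, Rmult_0_r. apply exp_0.
Qed.

Lemma one_lt_two_pow r : r < 0 -> 1 < Rpower 2 (- r).
Proof.
  intros Hr. unfold Rpower. rewrite <- exp_0. apply exp_increasing.
  assert (0 < ln 2) by (rewrite <- ln_1; apply ln_increasing; lra).
  nra.
Qed.

Lemma lin_deriv a b x : derivable_pt_lim (fun s => a + b * s) x b.
Proof.
  intros eps He. exists (mkposreal 1 Rlt_0_1). intros h Hh _.
  replace ((a + b * (x + h) - (a + b * x)) / h - b) with 0 by (field; exact Hh).
  rewrite Rabs_R0; exact He.
Qed.

Theorem mainTheorem13 :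
  forall rho : R, rho < 0 ->
  ~ (exists (p : R -> R) (x1 x2 : R),
        in_Psi (fun x => x) (fun x => 2 * x) rho x1 x2 /\
        walrasian (fun x => x) (fun x => 2 * x) p x1 x2).
Proof.
  intros rho Hr [p [x1 [x2 [[Hf Hpsi] [[_ D1] [[_ D2] [Hle Hcl]]]]]]].
  destruct Hf as [H1 [H2 H12]].
  assert (Hx12 : x1 <= x2).
  { pose proof (D1 x2 H2). pose proof (D2 x1 H1). lra. }
  assert (Hsum : x1 + x2 = 1).
  { apply Hcl. destruct (classic (exists y, 0 <= y /\ p y > 0)) as [E|E]; [exact E|].
    exfalso. set (y0 := Rabs (2 * x2 - p x2) + 1).
    assert (Hy0 : 0 <= y0) by (unfold y0; pose proof (Rabs_pos (2*x2 - p x2)); lra).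
    assert (p y0 <= 0).
    { destruct (Rle_dec (p y0) 0) as [h|h]; [exact h|].
      exfalso; apply E; exists y0; split; [exact Hy0|lra]. }
    pose proof (D2 y0 Hy0). pose proof (Rle_abs (2 * x2 - p x2)). unfold y0 in *. lra. }
  assert (Hx1 : 0 < x1).
  { destruct (Rle_dec x1 0) as [h|h]; [|lra]. exfalso.
    assert (F : feasible (1/2) (1/2)) by (unfold feasible; lra).
    pose proof (Hpsi _ _ F) as Hc. simpl in Hc.
    unfold ces at 2 in Hc. destruct (Rle_dec x1 0); [|contradiction].
    rewrite ces_eq in Hc by lra. pose proof (Rpow_pos (Rpower (1/2) rho + Rpower (2*(1/2)) rho) (/rho)).
    lra. }
  assert (Hx2 : 0 < x2) by lra.
  destruct (Rle_lt_or_eq_dec _ _ Hx12) as [Hlt|Heq].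
  -
    assert (F : feasible x2 x1) by (unfold feasible; lra).
    pose proof (Hpsi _ _ F) as Hc. simpl in Hc.
    apply (Rle_not_lt _ _ Hc). apply ces_lt; try lra.
    rewrite <- !Rpower_mult_distr by lra.
    pose proof (Rpow_anti x1 x2 rho Hx1 Hlt Hr).
    pose proof (two_pow_lt1 rho Hr).
    assert (0 < (Rpower x1 rho - Rpower x2 rho) * (1 - Rpower 2 rho))
      by (apply Rmult_lt_0_compat; lra).
    nra.
  -
    assert (e1 : x1 = 1/2) by lra. assert (e2 : x2 = 1/2) by lra. subst x1 x2.
    set (P := fun x => Rpower x rho).
    set (f := plus_fct (comp P (fun s => 1/2 + 1 * s)) (comp P (fun s => 1 + (-2) * s))).
    set (l := rho * Rpower (1/2) (rho - 1) * 1 + rho * Rpower (1 - 2 * 0) (rho - 1) * (-2)).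
    assert (Hd : derivable_pt_lim f 0 l).
    { unfold f, l. apply derivable_pt_lim_plus.
      - apply derivable_pt_lim_comp.
        + apply lin_deriv.
        + unfold P. replace (1/2 + 1 * 0) with (1/2) by ring.
          apply derivable_pt_lim_power. lra.
      - apply derivable_pt_lim_comp.
        + apply lin_deriv.
        + unfold P. replace (1 + -2 * 0) with (1 - 2 * 0) by ring. apply derivable_pt_lim_power. lra. }
    assert (Hl : l < 0).
    { unfold l. replace (1 - 2 * 0) with 1 by ring.
      assert (Rpower 1 (rho - 1) = 1) by
        (unfold Rpower; rewrite ln_1, Rmult_0_r; apply exp_0).
      assert (Rpower (1/2) (rho - 1) = 2 * Rpower 2 (- rho)).
      { replace (1/2) with (/2) by field. unfold Rpower. rewrite ln_Rinv by lra.
        replace ((rho - 1) * - ln 2) with (ln 2 + (- rho) * ln 2) by ring.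
        rewrite exp_plus, exp_ln by lra. reflexivity. }
      pose proof (one_lt_two_pow rho Hr). nra. }
    destruct (Hd (- l / 2)) as [delta Hdel]; [lra|].
    pose proof (cond_pos delta) as Hdp.
    set (h := Rmin (delta / 2) (1 / 4)).
    assert (Hh0 : 0 < h) by (unfold h; apply Rmin_glb_lt; lra).
    assert (Hh1 : h <= 1/4) by (unfold h; apply Rmin_r).
    assert (Hh2 : h <= delta/2) by (unfold h; apply Rmin_l).
    pose proof (Hdel h ltac:(lra) ltac:(rewrite Rabs_right; lra)) as Hq.
    apply Rabs_def2 in Hq. destruct Hq as [Hq _].
    assert (Hfh : (f (0 + h) - f 0) / h < 0) by lra.
    assert (Hfh' : f (0 + h) - f 0 < 0).
    { replace (f (0 + h) - f 0) with ((f (0 + h) - f 0) / h * h) by (field; lra).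
      nra. }
    assert (F : feasible (1/2 + h) (1/2 - h)) by (unfold feasible; lra).
    pose proof (Hpsi _ _ F) as Hc. simpl in Hc.
    apply (Rle_not_lt _ _ Hc). apply ces_lt; try lra.
    unfold f, plus_fct, comp, P in Hfh'.
    replace (2 * (1/2 - h)) with (1 - 2 * h) by field.
    replace (0 + h) with h in Hfh' by ring.
    replace (1/2 + 1 * 0) with (1/2) in Hfh' by ring.
    replace (1 + -2 * 0) with (2 * (1/2)) in Hfh' by field.
    replace (1/2 + 1 * h) with (1/2 + h) in Hfh' by ring.
    replace (1 + -2 * h) with (1 - 2 * h) in Hfh' by ring.
    lra.
Qed.
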